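(* Let $f : \widehat{\mathbb{Z}} \to \widehat{\mathbb{Z}}$ be congruence preserving and $s \in \widehat{\mathbb{Z}}$. Then $\lambda_f$ is a period map of $f{\Uparrow}_s$.
   Context: $\mathbb{N} = \{1,2,\dots\}$, $\widehat{\mathbb{Z}} = \varprojlim_n \mathbb{Z}/n\mathbb{Z}$; $s \equiv_n t$ means $s-t\in n\widehat{\mathbb{Z}}$; $\widehat{\cdot}:\mathbb{N}\to\widehat{\mathbb{Z}}$ is the natural embedding. For continuous $g:\widehat{\mathbb{Z}}\to\widehat{\mathbb{Z}}$, a map $P:\mathbb{N}\to\mathbb{N}$ is a period map of $g$ if $s \equiv_{P(n)} t$ implies $g(s)\equiv_n g(t)$ for all $s,t,n$. A continuous $f$ is congruence preserving if the identity of $\mathbb{N}$ is a period map of $f$; then $f$ induces self-maps $f_n:\mathbb{Z}/n\mathbb{Z}\to\mathbb{Z}/n\mathbb{Z}$, and $\lambda_f(n)$ denotes the period of $f_n$, i.e. the least common multiple over $y \in \mathbb{Z}/n\mathbb{Z}$ of the cycle length of $y$ (the least $l \ge 1$ with $f_n^k(y) = f_n^{k+l}(y)$ for some $k \ge 0$). For such $f$ and $x \in \widehat{\mathbb{Z}}$, $f{\Uparrow}_x:\widehat{\mathbb{Z}}\to\widehat{\mathbb{Z}}$ is defined by $f{\Uparrow}_x(s) = \lim_{i\to\infty} f^{n_i}(x)$ for any sequence of positive integers $n_i \to +\infty$ in $\mathbb{R}$ with $\widehat{n_i}\to s$ in $\widehat{\mathbb{Z}}$ (this limit exists and is independent of the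 sequence for congruence preserving $f$). *)

(* Defs.v *)
From HB Require Import structures.
From mathcomp Require Import all_boot all_order all_algebra.
From mathcomp Require Import boolp.
From mathcomp Require Import ring.
Set Implicit Arguments. Unset Strict Implicit. Unset Printing Implicit Defensive.
Import Order.TTheory GRing.Theory Num.Theory.
Local Open Scope ring_scope.

Lemma modz_modz_dvd (m : int) (k d : int) :
  (d %| k)%Z -> ((m %% k)%Z %% d)%Z = (m %% d)%Z.
Proof.
move=> dk; apply/eqP; rewrite eqz_mod_dvd.
have -> : (m %% k)%Z - m = - ((m %/ k)%Z * k).
  by rewrite {2}(divz_eq m k) opprD addrCA subrr addr0.
by rewrite rpredN dvdz_mull.
Qed.

(* An element of Zhat = lim_n Z/nZ is a compatible family of canonical
   residues: [zv x k] is the residue of x modulo k.+1, in [0, k]. *)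
Record Zhat := MkZhat {
  zv : nat -> int;
  zv_compat : forall d k : nat, (d.+1 %| k.+1)%N -> (zv k %% d.+1)%Z = zv d
}.

Lemma zhat_eq (x y : Zhat) : zv x =1 zv y -> x = y.
Proof.
case: x y => [x px] [y py] /= /boolp.funext exy; subst y.
by rewrite (Prop_irrelevance px py).
Qed.

Definition zhat_of_nat_fun (m : nat) : nat -> int := fun k => ((m%:Z) %% k.+1)%Z.
Lemma zhat_of_nat_compat (m : nat) d k : (d.+1 %| k.+1)%N ->
  (zhat_of_nat_fun m k %% d.+1)%Z = zhat_of_nat_fun m d.
Proof. by move=> dk; rewrite /zhat_of_nat_fun modz_modz_dvd // dvdz_nat. Qed.
Definition zhat_of_nat (m : nat) : Zhat := MkZhat (@zhat_of_nat_compat m).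

Definition zsub_fun (x y : Zhat) : nat -> int := fun k => ((zv x k - zv y k) %% k.+1)%Z.
Lemma zsub_compat (x y : Zhat) d k : (d.+1 %| k.+1)%N ->
  (zsub_fun x y k %% d.+1)%Z = zsub_fun x y d.
Proof.
move=> dk; rewrite /zsub_fun modz_modz_dvd ?dvdz_nat //.
rewrite -(zv_compat x dk) -(zv_compat y dk).
apply/eqP; rewrite eqz_mod_dvd.
have -> : zv x k - zv y k - ((zv x k %% d.+1)%Z - (zv y k %% d.+1)%Z) =
  (zv x k - (zv x k %% d.+1)%Z) - (zv y k - (zv y k %% d.+1)%Z).
  by ring.
by rewrite rpredB // -eqz_mod_dvd modz_mod.
Qed.
Definition zsub (x y : Zhat) : Zhat := MkZhat (@zsub_compat x y).

Definition zscale_fun (n : nat) (x : Zhat) : nat -> int :=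
  fun k => ((n%:Z * zv x k) %% k.+1)%Z.
Lemma zscale_compat n (x : Zhat) d k : (d.+1 %| k.+1)%N ->
  (zscale_fun n x k %% d.+1)%Z = zscale_fun n x d.
Proof.
move=> dk; rewrite /zscale_fun modz_modz_dvd ?dvdz_nat //.
by rewrite -(zv_compat x dk) modzMmr.
Qed.
Definition zscale (n : nat) (x : Zhat) : Zhat := MkZhat (@zscale_compat n x).

Definition zcongr (n : nat) (s t : Zhat) : Prop := exists u : Zhat, zsub s t = zscale n u.

(* continuity of g : Zhat -> Zhat for the profinite topology
   (basic neighbourhoods of s are s + m Zhat, m >= 1) *)
Definition zcontinuous (g : Zhat -> Zhat) : Prop :=
  forall (s : Zhat) (n : nat), (0 < n)%N ->
    exists2 m : nat, (0 < m)%N & forall t : Zhat, zcongr m t s -> zcongr n (g t) (g s).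

Definition is_period_map (g : Zhat -> Zhat) (P : nat -> nat) : Prop :=
  forall (n : nat), (0 < n)%N -> forall s t : Zhat, zcongr (P n) s t -> zcongr n (g s) (g t).

Definition congruence_preserving (f : Zhat -> Zhat) : Prop :=
  zcontinuous f /\ is_period_map f id.

(* the induced map f_n on Z/nZ = {0, ..., n-1}: y |-> (f (hat y)) mod n *)
Definition fmod (f : Zhat -> Zhat) (n : nat) (y : nat) : nat :=
  `|zv (f (zhat_of_nat y)) n.-1|%N.

Definition is_cycle_step (f : Zhat -> Zhat) (n y l : nat) : bool :=
  (0 < l)%N && `[< exists k : nat, iter k (fmod f n) y = iter (k + l) (fmod f n) y >].

Definition cycle_len (f : Zhat -> Zhat) (n y : nat) : nat :=
  match pselect (exists l, is_cycle_step f n y l) with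
  | left h => ex_minn h
  | right _ => 0%N
  end.

Definition lambda (f : Zhat -> Zhat) (n : nat) : nat :=
  \big[lcmn/1%N]_(y < n) cycle_len f n y.

Definition nat_to_infty (u : nat -> nat) : Prop :=
  forall M : nat, exists i0, forall i, (i0 <= i)%N -> (M <= u i)%N.
Definition zconverges (u : nat -> Zhat) (v : Zhat) : Prop :=
  forall m : nat, (0 < m)%N -> exists i0, forall i, (i0 <= i)%N -> zcongr m (u i) v.

Definition is_uparrow (f : Zhat -> Zhat) (x : Zhat) (g : Zhat -> Zhat) : Prop :=
  forall (s : Zhat) (n : nat -> nat),
    (forall i, (0 < n i)%N) -> nat_to_infty n ->
    zconverges (fun i => zhat_of_nat (n i)) s ->
    zconverges (fun i => iter (n i) f x) (g s).

(* Main.v *)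
Require Import Defs.
From mathcomp Require Import all_boot all_order all_algebra.
From mathcomp Require Import all_boot all_order all_algebra boolp ring zify.
Set Implicit Arguments. Unset Strict Implicit. Unset Printing Implicit Defensive.
Import Order.TTheory GRing.Theory Num.Theory.
Local Open Scope ring_scope.

Lemma zv_mod (x : Zhat) k : (zv x k %% k.+1)%Z = zv x k.
Proof. exact: zv_compat (dvdnn _). Qed.

Lemma zv_ge0 (x : Zhat) k : 0 <= zv x k.
Proof. by rewrite -zv_mod modz_ge0. Qed.

Lemma zv_lt (x : Zhat) k : zv x k < k.+1%:Z.
Proof. by rewrite -zv_mod ltz_pmod. Qed.

Lemma modzB_eq (a a' b b' m : int) :
  (a %% m)%Z = (a' %% m)%Z -> (b %% m)%Z = (b' %% m)%Z ->
  ((a - b) %% m)%Z = ((a' - b') %% m)%Z.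
Proof.
move=> ha hb; apply/eqP; rewrite eqz_mod_dvd.
have -> : a - b - (a' - b') = (a - a') - (b - b') by ring.
by rewrite rpredB // -eqz_mod_dvd; apply/eqP.
Qed.

Lemma zcongr_lvl n (s t : Zhat) : zcongr n.+1 s t -> zv s n = zv t n.
Proof.
case=> u /(congr1 (fun x => zv x n)) /=.
rewrite /zsub_fun /zscale_fun modzMr => /eqP.
rewrite -[0]/((0 %% n.+1)%Z) eqz_mod_dvd subr0 -eqz_mod_dvd !zv_mod.
by move/eqP.
Qed.
Section S.
Variables (n : nat) (s t : Zhat).
Hypothesis hst : zv s n = zv t n.
Let N k := (n.+1 * k.+1).-1.
Lemma NS k : (N k).+1 = (n.+1 * k.+1)%N.
Proof. by rewrite /N prednK // muln_gt0. Qed.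
Let D k : int := zv s (N k) - zv t (N k).
Lemma D_dvd k : (n.+1%:Z %| D k)%Z.
Proof.
rewrite /D -eqz_mod_dvd.
have h : (n.+1 %| (N k).+1)%N by rewrite NS dvdn_mulr.
by rewrite (zv_compat s h) (zv_compat t h) hst.
Qed.
Definition ufun k := (divz (D k) n.+1 %% k.+1)%Z.
Lemma ucompat d k : (d.+1 %| k.+1)%N -> (ufun k %% d.+1)%Z = ufun d.
Proof.
move=> dk; rewrite /ufun modz_modz_dvd ?dvdz_nat //.
apply/eqP; rewrite eqz_mod_dvd.
have nz : n.+1%:Z != 0 by [].
rewrite -(dvdz_mul2r nz) mulrBl !divzK ?D_dvd //.
rewrite -PoszM mulnC -eqz_mod_dvd.
have h : ((N d).+1 %| (N k).+1)%N by rewrite !NS dvdn_pmul2l.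
rewrite /D -NS.
apply/eqP; apply: modzB_eq.
  by rewrite (zv_compat s h) zv_mod.
by rewrite (zv_compat t h) zv_mod.
Qed.
Definition uZ : Zhat := MkZhat ucompat.
Lemma sub_eq : zsub s t = zscale n.+1 uZ.
Proof.
apply: zhat_eq => k /=; rewrite /zsub_fun /zscale_fun /= /ufun modzMmr.
rewrite mulrC divzK ?D_dvd // /D.
have h : (k.+1 %| (N k).+1)%N by rewrite NS dvdn_mull.
by apply: modzB_eq; rewrite (zv_compat _ h) zv_mod.
Qed.
End S.

Lemma lvl_zcongr n (s t : Zhat) : zv s n = zv t n -> zcongr n.+1 s t.
Proof. move=> h; exists (uZ h); exact: sub_eq. Qed.
Local Open Scope nat_scope.

Lemma pigeon (F : nat -> nat) n r : (forall y, F y < n) -> r < n ->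
  exists i j, [/\ i < j, j <= n & iter i F r = iter j F r].
Proof.
move=> hF hr.
have hlt : forall i, iter i F r < n by case=> [|i] //=.
have [[i [j hij]]|nex] := pselect (exists i j, [/\ i < j, j <= n & iter i F r = iter j F r]).
  by exists i, j.
exfalso.
pose g := fun i : 'I_n.+1 => Ordinal (hlt i).
have ginj : injective g.
  move=> x y /(congr1 val) /= e; apply/val_inj => /=.
  case: (ltngtP x y) => // h.
    by case: nex; exists x, y; split => //; rewrite -ltnS.
  by case: nex; exists y, x; split => //; rewrite -ltnS.
by have := leq_card g ginj; rewrite !card_ord ltnn.
Qed.

Lemma iter_shift (F : nat -> nat) r i p :
  iter i F r = iter (i + p) F r -> forall m N, i <= m -> iter m F r = iter (m + N * p) F r.
Proof.
move=> e m N im; elim: N => [|N IH]; first by rewrite addn0.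
rewrite IH mulSn (addnC p) addnA.
have -> : m + N * p = (m + N * p - i) + i by rewrite subnK // (leq_trans im) ?leq_addr.
by rewrite !iterD e iterD.
Qed.

Lemma iter_periodic (F : nat -> nat) n r c L :
  (forall y, F y < n) -> r < n -> (exists k, iter k F r = iter (k + c) F r) -> c %| L ->
  forall a b, n <= a -> n <= b -> a = b %[mod L] -> iter a F r = iter b F r.
Proof.
move=> hF hr [k ek] cL.
have [i [j [ij jn eij]]] := pigeon hF hr.
have hp : iter i F r = iter (i + (j - i)) F r by rewrite subnKC // ltnW.
have pp : 0 < j - i by rewrite subn_gt0.
have hc : forall m, i <= m -> iter m F r = iter (m + c) F r.
  move=> m im.
  rewrite (iter_shift hp k im) (iter_shift hp k (leq_trans im (leq_addr c m))).
  have km : k <= m + k * (j - i) by rewrite (leq_trans _ (leq_addl _ _)) // leq_pmulr.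
  rewrite (addnC m c) -addnA addnC.
  rewrite addnC in km.
  rewrite -(subnK km) iterD ek -iterD.
  congr (iter _ F r); lia.
have hcN : forall m N, i <= m -> iter m F r = iter (m + N * c) F r.
  move=> m N im; elim: N => [|N IH]; first by rewrite addn0.
  by rewrite IH mulSn (addnC c) addnA hc // (leq_trans im) ?leq_addr.
move=> a b na nb.
wlog ab : a b na nb / a <= b.
  move=> W; case: (leqP a b) => h; first exact: W.
  move=> e; symmetry; apply: W => //; first exact: ltnW.
move=> e; have /eqP : b = a %[mod L] by rewrite e.
rewrite eqn_mod_dvd // => /(dvdn_trans cL) /dvdnP [N eN].
have ia : i <= a by rewrite (leq_trans _ na) // (leq_trans (ltnW ij)).
by rewrite (hcN a N ia) -eN subnKC.
Qed.

Lemma zv_hat m k : zv (zhat_of_nat m) k = (m %% k.+1)%N.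
Proof. by rewrite /= /zhat_of_nat_fun modz_nat. Qed.

Lemma fmod_lt f n y : fmod f n.+1 y < n.+1.
Proof. by rewrite /fmod /= -ltz_nat gez0_abs ?zv_ge0 ?zv_lt. Qed.

Lemma cyc f n r : r < n.+1 ->
  0 < cycle_len f n.+1 r /\
  exists k, iter k (fmod f n.+1) r = iter (k + cycle_len f n.+1 r) (fmod f n.+1) r.
Proof.
move=> hr; rewrite /cycle_len; case: pselect => [h|nh].
  case: (ex_minnP h) => c /andP [c0 /asboolP [k hk]] _; split => //; by exists k.
exfalso; have [i [j [ij jn eij]]] := pigeon (@fmod_lt f n) hr.
apply: nh; exists (j - i); rewrite /is_cycle_step subn_gt0 ij /=.
by apply/asboolP; exists i; rewrite subnKC // ltnW.
Qed.

Lemma lambda_gt0 f n : 0 < lambda f n.+1.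
Proof.
rewrite /lambda; apply: (big_ind (fun m => 0 < m)) => //.
  by move=> x y hx hy; rewrite lcmn_gt0 hx hy.
by move=> i _; case: (cyc f (ltn_ord i)).
Qed.

Lemma cyc_dvd f n r : r < n.+1 -> cycle_len f n.+1 r %| lambda f n.+1.
Proof. by move=> hr; apply: (biglcmn_sup (Ordinal hr)). Qed.

Lemma K1 f n (y : Zhat) : is_period_map f id ->
  zv (f y) n = (fmod f n.+1 `|zv y n|%N)%:Z.
Proof.
move=> hP; set r := `|zv y n|%N.
have hr : r%:Z = zv y n by rewrite /r gez0_abs ?zv_ge0.
have e : zv (zhat_of_nat r) n = zv y n.
  rewrite zv_hat modn_small // -ltz_nat hr; exact: zv_lt.
have := zcongr_lvl (hP n.+1 isT _ _ (lvl_zcongr (esym e))).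
by rewrite /fmod /= gez0_abs ?zv_ge0.
Qed.

Lemma K2 f n (x : Zhat) a : is_period_map f id ->
  zv (iter a f x) n = (iter a (fmod f n.+1) `|zv x n|%N)%:Z.
Proof.
move=> hP; elim: a => [|a IH] /=; first by rewrite gez0_abs ?zv_ge0.
by rewrite K1 // IH absz_nat.
Qed.

Definition seqn (x : Zhat) (i : nat) : nat := (`|zv x (i.+1`!).-1|%N + i.+1`!)%N.

Lemma seq_mod x m i : 0 < m -> m <= i.+1 ->
  zv (zhat_of_nat (seqn x i)) m.-1 = zv x m.-1.
Proof.
move=> m0 mi; rewrite zv_hat prednK // /seqn.
have hd : m %| i.+1`! by apply: dvdn_fact; rewrite m0.
rewrite -modnDmr (eqP hd) addn0 -modz_nat gez0_abs ?zv_ge0 //.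
have h : (m.-1.+1 %| (i.+1`!).-1.+1)%N by rewrite !prednK ?fact_gt0.
by rewrite -(zv_compat x h) prednK.
Qed.

Lemma seq_ge x i : i.+1 <= seqn x i.
Proof. by rewrite /seqn (leq_trans (fact_geq _)) ?leq_addl. Qed.

Lemma seq_conv x : zconverges (fun i => zhat_of_nat (seqn x i)) x.
Proof.
move=> m m0; exists m => i mi.
rewrite -(prednK m0); apply: lvl_zcongr; apply: seq_mod => //.
exact: leqW.
Qed.

Lemma seq_infty x : nat_to_infty (seqn x).
Proof.
move=> M; exists M => i Mi; rewrite (leq_trans Mi) // (leq_trans (leqnSn i)) //.
exact: seq_ge.
Qed.

Lemma seq_pos x i : 0 < seqn x i.
Proof. exact: leq_trans (seq_ge x i). Qed.

Theorem proposition3p9 (f : Zhat -> Zhat) (s : Zhat) (g : Zhat -> Zhat) :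
  congruence_preserving f -> is_uparrow f s g -> is_period_map g (lambda f).
Proof.
move=> [_ hP] hU [//|n] _ s' t' hc.
have L0 := lambda_gt0 f n.
set L := lambda f n.+1 in L0 hc.
have hst : zv s' L.-1 = zv t' L.-1.
  by apply: zcongr_lvl; rewrite prednK.
have [i1 h1] := hU s' (seqn s') (seq_pos s') (seq_infty s') (seq_conv s') n.+1 isT.
have [i2 h2] := hU t' (seqn t') (seq_pos t') (seq_infty t') (seq_conv t') n.+1 isT.
set i := maxn (maxn i1 i2) (maxn L n).
have e1 := zcongr_lvl (h1 i (leq_trans (leq_maxl i1 i2) (leq_maxl _ _))).
have e2 := zcongr_lvl (h2 i (leq_trans (leq_maxr i1 i2) (leq_maxl _ _))).
have Li : L <= i.+1 by rewrite ltnW // ltnS (leq_trans (leq_maxl L n)) ?leq_maxr.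
have ni : n.+1 <= i.+1 by rewrite ltnS (leq_trans (leq_maxr L n)) ?leq_maxr.
have hmod : seqn s' i = seqn t' i %[mod L].
  have := seq_mod s' L0 Li; have := seq_mod t' L0 Li.
  rewrite !zv_hat prednK // hst => <- [] //.
apply: lvl_zcongr; rewrite -e1 -e2 !K2 //; congr Posz.
have hr : `|zv s n|%N < n.+1 by rewrite -ltz_nat gez0_abs ?zv_ge0 ?zv_lt.
have [_ hk] := cyc f hr.
apply: (iter_periodic (@fmod_lt f n) hr hk (cyc_dvd f hr)) => //.
  exact: leq_trans ni (seq_ge _ _).
exact: leq_trans ni (seq_ge _ _).
Qed.
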